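(* Let $A$ be a local ring with residue field $k$, let $r\ge1$, and let $\phi_1,\ldots,\phi_m:A\to F$ be ring homomorphisms into a field $F$ such that $\prod_{i=1}^m\phi_i(u^r)=1$ for all $u\in A^\times$. Then $k$ is a finite field with $p^f$ elements and $mr=(p-1)t$ for some integer $t\ge f$; in particular $(p-1)f\le mr$. *)

(* Defs.v *)
From HB Require Import structures.
From mathcomp Require Import all_boot all_order all_algebra.
Set Implicit Arguments. Unset Strict Implicit. Unset Printing Implicit Defensive.
Import Order.TTheory GRing.Theory Num.Theory.
Local Open Scope ring_scope.

(* A (commutative, nontrivial) ring A is local iff its non-units form an
   ideal, i.e. the sum of two non-units is a non-unit (the unique maximal
   ideal is then the set of non-units). Nontriviality (1 != 0) is built
   into comUnitRingType. *)
Definition local_ring (A : comUnitRingType) : Prop :=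
  forall x y : A, x \isn't a GRing.unit -> y \isn't a GRing.unit ->
    x + y \isn't a GRing.unit.

(* For a local ring A with maximal ideal M (= the non-units), the residue
   field k = A/M has exactly N elements: there is a complete system of N
   pairwise incongruent representatives modulo M. *)
Definition residue_field_card (A : comUnitRingType) (N : nat) : Prop :=
  exists s : seq A,
    [/\ size s = N,
        (forall i j : nat, (i < N)%N -> (j < N)%N ->
            s`_i - s`_j \isn't a GRing.unit -> i = j)
      & (forall a : A, exists2 i : nat, (i < N)%N & a - s`_i \isn't a GRing.unit)].

(* Main.v *)
Require Import Defs.
From HB Require Import structures.
From mathcomp Require Import all_boot all_order all_algebra.
From mathcomp Require Import zify ring.
From Stdlib Require Import Classical.
Set Implicit Arguments. Unset Strict Implicit. Unset Printing Implicit Defensive.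
Import Order.TTheory GRing.Theory Num.Theory.
Local Open Scope ring_scope.

Lemma prod_expand (F : comNzRingType) (I : finType) (D : {set I}) (U V : I -> F) :
  \prod_(k in D) (U k + V k) =
  \sum_(S in powerset D) (\prod_(k in S) V k) * \prod_(k in D :\: S) U k.
Proof.
rewrite big_mkcond /=.
under eq_bigr => k _ do
  have -> : (if k \in D then U k + V k else 1) =
            (if k \in D then V k else 0) + (if k \in D then U k else 1)
    by case: (k \in D); rewrite ?addr0 ?add0r // addrC.
rewrite bigA_distr (bigID (fun J : {set I} => J \subset D)) /=.
rewrite [X in _ + X]big1 ?addr0; last first.
  move=> J /subsetPn [k kJ kD].
  by rewrite (bigD1 k) //= kJ (negPf kD) mul0r.
apply: eq_big => [J|J JD]; first by rewrite powersetE.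
rewrite (big_mkcond (fun k => k \in J)) (big_mkcond (fun k => k \in D :\: J)) -big_split /=.
apply: eq_bigr => k _; rewrite !inE.
case kJ: (k \in J); first by rewrite (subsetP JD k kJ) /= mulr1.
by rewrite /= mul1r; case: (k \in D).
Qed.

Section Fp.
Variables (F : fieldType) (p : nat).
Hypothesis pF : p \in [pchar F].

Lemma pp : prime p. Proof. exact: pcharf_prime pF. Qed.
Lemma p_gt0 : (0 < p)%N. Proof. exact: prime_gt0 pp. Qed.

Lemma natF_inj i j : (i < p)%N -> (j < p)%N -> (i%:R : F) = j%:R -> i = j.
Proof.
wlog ij : i j / (i <= j)%N.
  move=> W ip jp e; case: (leqP i j) => h; first exact: W.
  by symmetry; apply: W => //; apply: ltnW.
move=> ip jp e.
have d : (p %| j - i)%N by rewrite (dvdn_pcharf pF) natrB // e subrr.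
case: (posnP (j - i)) => [z|pos]; first lia.
have := dvdn_leq pos d; lia.
Qed.

Lemma natF_mod i j : ((i%:R : F) = j%:R) <-> (i = j %[mod p]).
Proof.
split=> [e|e].
  apply: natF_inj; try exact: ltn_pmod p_gt0.
  by rewrite !(GRing.natr_mod_pchar pF).
by rewrite -(GRing.natr_mod_pchar pF) e (GRing.natr_mod_pchar pF).
Qed.

Lemma natF_neq0 x : ~~ (p %| x)%N -> (x%:R : F) != 0.
Proof. by rewrite (dvdn_pcharf pF). Qed.

Lemma natF_fermat x : ~~ (p %| x)%N -> (x%:R : F) ^+ p.-1 = 1.
Proof.
move=> hx; have := natF_neq0 hx => nz.
have e : (x%:R : F) ^+ p = x%:R.
  by rewrite -natrX; apply/natF_mod; apply: fermat_little pp.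
apply: (mulfI nz); rewrite mulr1 -exprS prednK //; exact: p_gt0.
Qed.

Lemma roots_bound e : (0 < e)%N ->
  (forall x, (0 < x < p)%N -> (x%:R : F) ^+ e = 1) -> (p.-1 <= e)%N.
Proof.
move=> e0 H.
pose rs := [seq (i.+1)%:R : F | i <- iota 0 p.-1].
have nz : ('X^e - 1 : {poly F}) != 0.
  by rewrite -size_poly_eq0 size_Xn_sub_1.
have hr : all (root ('X^e - 1)) rs.
  apply/allP => z /mapP [i]; rewrite mem_iota add0n => hi ->.
  rewrite rootE !hornerE H ?subrr //.
  move: hi; rewrite /=; have := p_gt0; lia.
have := max_poly_roots nz hr.
rewrite size_Xn_sub_1 // size_map size_iota ltnS; apply.
rewrite map_inj_in_uniq ?iota_uniq //.
move=> i j; rewrite !mem_iota !add0n => hi hj /natF_inj.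
have q : forall k, (k < p.-1)%N -> (k.+1 < p)%N.
  by move=> k hk; rewrite -ltnS prednK // p_gt0 in hk.
by move=> /(_ (q _ hi) (q _ hj)) [].
Qed.

Lemma psum0 e : (e < p.-1)%N -> \sum_(x < p) (x%:R : F) ^+ e = 0.
Proof.
move=> he; case: e he => [|e] he.
  under eq_bigr do rewrite expr0.
  by rewrite sumr_const card_ord (pcharf0 pF).
have [/existsP [a /andP [a0 hae]] | /existsPn H] :=
   boolP [exists a : 'I_p, (0 < a)%N && ((a%:R : F) ^+ e.+1 != 1)]; last first.
  exfalso; have : (p.-1 <= e.+1)%N.
    apply: roots_bound => // x /andP [x0 xp].
    by have := H (Ordinal xp); rewrite /= x0 /= negbK => /eqP.
  by move: he; lia.
have anz : (a%:R : F) != 0.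
  apply: natF_neq0; apply/negP => /(dvdn_leq a0); have := ltn_ord a; lia.
pose h (x : 'I_p) : 'I_p := Ordinal (ltn_pmod (x * a) p_gt0).
have hval x : ((h x : nat)%:R : F) = x%:R * a%:R by rewrite /= (GRing.natr_mod_pchar pF) natrM.
have hinj : injective h.
  move=> x y /(congr1 (fun z : 'I_p => (z : nat)%:R : F)); rewrite !hval => /(mulIf anz).
  by move=> /natF_inj e'; apply: val_inj; apply: e'.
set S := \sum_(x < p) _.
have : S = (a%:R) ^+ e.+1 * S.
  rewrite {1}/S (reindex_inj hinj) mulr_sumr; apply: eq_bigr => x _.
  by rewrite hval exprMn mulrC.
move/eqP; rewrite -subr_eq0 -{1}(mul1r S) -mulrBl mulf_eq0 subr_eq0 eq_sym (negPf hae) /=.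
by move/eqP.
Qed.
End Fp.

Section Grid.
Variables (F : fieldType) (p : nat).
Hypothesis pF : p \in [pchar F].

Fixpoint grid n : seq (seq nat) :=
  if n is n'.+1 then [seq x :: c | x <- iota 0 p, c <- grid n'] else [:: [::]].

Definition lin (R : nzRingType) (b : seq R) (c : seq nat) : R :=
  \sum_(j < size c) (nth 0%N c j)%:R * b`_j.

Lemma lin_cons (R : nzRingType) (b : seq R) x c :
  lin b (x :: c) = x%:R * b`_0 + lin (behead b) c.
Proof.
rewrite /lin big_ord_recl /=; congr (_ + _); apply: eq_bigr => j _.
by rewrite /= nth_behead.
Qed.

Lemma grid_split n (g : seq nat -> F) :
  \sum_(c <- grid n.+1) g c = \sum_(x <- iota 0 p) \sum_(c <- grid n) g (x :: c).
Proof. exact: big_allpairs_dep. Qed.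

Lemma psum0_iota e : (e < p.-1)%N -> \sum_(x <- iota 0 p) (x%:R : F) ^+ e = 0.
Proof.
move=> he; have -> : iota 0 p = index_iota 0 p by rewrite /index_iota subn0.
by rewrite big_mkord; apply: psum0.
Qed.

Lemma grid_sum0 n : forall (I : finType) (D : {set I}) (a : I -> F) (b : I -> seq F),
  (#|D| < p.-1 * n)%N -> \sum_(c <- grid n) \prod_(k in D) (a k + lin (b k) c) = 0.
Proof.
elim: n => [|n IH] I D a b hD; first by rewrite muln0 in hD.
rewrite grid_split.
have E : forall x c, \prod_(k in D) (a k + lin (b k) (x :: c)) =
   \sum_(S in powerset D) (\prod_(k in S) (x%:R * (b k)`_0)) *
      \prod_(k in D :\: S) (a k + lin (behead (b k)) c).
  move=> x c; rewrite -prod_expand; apply: eq_bigr => k _.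
  by rewrite lin_cons addrA addrAC.
under eq_bigr do under eq_bigr do rewrite E.
under eq_bigr do rewrite exchange_big /=.
rewrite exchange_big /= big1 // => S SD.
under eq_bigr => x _ do rewrite -mulr_sumr big_split /= prodr_const.
rewrite -mulr_suml.
have [lt|ge] := ltnP #|S| p.-1.
  by rewrite -mulr_suml psum0_iota // !mul0r.
rewrite IH ?mulr0 //.
rewrite powersetE in SD.
rewrite cardsD (setIidPr SD).
have := subset_leq_card SD; rewrite mulnS in hD; move: hD ge; set q := (p.-1 * n)%N; set s := #|S|; set d := #|D|; set pm := p.-1; clearbody q s d pm; lia.
Qed.

Lemma iota_index : iota 0 p = index_iota 0 p.
Proof. by rewrite /index_iota subn0. Qed.

Lemma mem_grid n c : (c \in grid n) = (size c == n) && all (fun x => x < p)%N c.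
Proof.
elim: n c => [|n IH] [|x c] //=.
  by apply/negbTE/negP => /allpairsPdep [y [c' [_ _]]].
apply/allpairsPdep/idP => [[y [c' [hy hc' [-> ->]]]]|].
  move: hy hc'; rewrite mem_iota add0n IH => /andP [_ hy] /andP [/eqP hs hc].
  by rewrite /= hs eqxx hy hc.
move=> /andP [hs /andP [hx hc]]; exists x, c; split => //.
  by rewrite mem_iota.
by rewrite IH -(eqn_add2r 1) !addn1 hs.
Qed.

Lemma size_grid n : size (grid n) = (p ^ n)%N.
Proof. by elim: n => [|n IH] //=; rewrite size_allpairs size_iota IH expnS. Qed.

Lemma grid_uniq n : uniq (grid n).
Proof.
elim: n => [|n IH] //=; apply: allpairs_uniq => //; first exact: iota_uniq.
by move=> [x c] [y d] _ _ /= [-> ->].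
Qed.

Lemma sum_grid_const n (K : F) : (0 < n)%N -> \sum_(c <- grid n) K = 0.
Proof.
case: n => // n _; rewrite grid_split.
under eq_bigr do rewrite -/(\sum_(c <- grid n) K).
by rewrite iota_index sumr_const_nat subn0 (mulrn_pchar pF).
Qed.

Lemma sum_grid_zero n : \sum_(c <- grid n) ((c == nseq n 0%N)%:R : F) = 1.
Proof.
elim: n => [|n IH]; first by rewrite /= big_cons big_nil eqxx addr0.
rewrite grid_split.
under eq_bigr => x _ do under eq_bigr => c _ do rewrite /= eqseq_cons -mulnb natrM.
under eq_bigr => x _ do rewrite -mulr_sumr IH mulr1.
have p0 := p_gt0 pF.
rewrite iota_index /index_iota subn0; case: p p0 => // q _.
rewrite /= big_cons eqxx /= big1_seq ?addr0 // => x /andP [_].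
by rewrite mem_iota => /andP [h _]; case: x h.
Qed.
End Grid.

Section Local.
Variables (A : comUnitRingType) (p : nat).
Hypotheses (hloc : local_ring A) (pp : prime p) (pA : (p%:R : A) \isn't a GRing.unit).

Definition nu (x : A) := x \isn't a GRing.unit.

Lemma nu0 : nu 0. Proof. by rewrite /nu unitr0. Qed.
Lemma nuD x y : nu x -> nu y -> nu (x + y). Proof. exact: hloc. Qed.
Lemma nuN x : nu x -> nu (- x). Proof. by rewrite /nu unitrN. Qed.
Lemma nuB x y : nu x -> nu y -> nu (x - y). Proof. by move=> hx hy; apply: nuD => //; apply: nuN. Qed.
Lemma nuMl x y : nu x -> nu (y * x).
Proof. by rewrite /nu unitrM => /negPf ->; rewrite andbF. Qed.
Lemma nuMr x y : nu x -> nu (x * y).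
Proof. by move=> h; rewrite mulrC; apply: nuMl. Qed.
Lemma nu_sum (I : Type) (s : seq I) (P : pred I) (G : I -> A) :
  (forall i, P i -> nu (G i)) -> nu (\sum_(i <- s | P i) G i).
Proof. move=> h; apply: (big_ind nu); [exact: nu0 | exact: nuD | exact: h]. Qed.
Lemma nu_natp k : (p %| k)%N -> nu (k%:R).
Proof. by move=> /dvdnP [q ->]; rewrite natrM; apply: nuMl. Qed.
Lemma nu_natB i j : i = j %[mod p] -> nu (i%:R - j%:R).
Proof.
wlog ij : i j / (j <= i)%N.
  move=> W e; case: (leqP j i) => h; first exact: W.
  by rewrite -opprB; apply: nuN; apply: W => //; apply: ltnW.
move=> e; rewrite -natrB //; apply: nu_natp.
by rewrite -eqn_mod_dvd // e.
Qed.
Lemma nu_unit u w : u \is a GRing.unit -> nu (u - w) -> ~~ nu w.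
Proof.
move=> hu h; apply/negP => hw.
have := nuD h hw; rewrite subrK /nu hu //.
Qed.

Lemma bezout_p x : ~~ (p %| x)%N -> exists a, (p %| 1 + a * x)%N.
Proof.
move=> hx; have [a _ h] := Bezoutl x (prime_gt0 pp).
exists a; move: h; suff -> : gcdn p x = 1%N by [].
by apply/eqP; rewrite -/(coprime p x) prime_coprime.
Qed.

Lemma unit_nat x : ~~ (p %| x)%N -> (x%:R : A) \is a GRing.unit.
Proof.
move=> hx; have [a h] := bezout_p hx; apply/negPn/negP => hn.
have h1 : nu ((1 + a * x)%:R - (a * x)%:R).
  by apply: nuB; [apply: nu_natp | rewrite natrM; apply: nuMl].
by move: h1; rewrite natrD addrK /nu unitr1.
Qed.

Lemma nu_sumB n (e1 e2 w : 'I_n -> A) : (forall j, nu (e1 j - e2 j)) ->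
  nu (\sum_j e1 j * w j - \sum_j e2 j * w j).
Proof.
move=> h; rewrite -sumrB; apply: nu_sum => j _; rewrite -mulrBl; exact: nuMr.
Qed.

Lemma linE (b : seq A) c n : size c = n ->
  lin b c = \sum_(j < n) (nth 0%N c j)%:R * b`_j.
Proof. by move=> <-. Qed.


Definition indep (a : seq A) := forall c, c \in grid p (size a) ->
  has (fun x => x != 0%N) c -> lin a c \is a GRing.unit.

Lemma indep_ext a y : indep a ->
  (forall c, c \in grid p (size a) -> ~~ nu (y - lin a c)) -> indep (y :: a).
Proof.
move=> ha hy c0; rewrite mem_grid; case: c0 => [|x c] //= /andP [hs /andP [hx hc]] hnz.
rewrite eqSS in hs.
have cg : c \in grid p (size a) by rewrite mem_grid hs hc.
rewrite lin_cons /=.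
case: (posnP x) => [x0|xpos].
  subst x; rewrite mul0r add0r; apply: ha cg _; exact: hnz.
apply/negPn/negP => hn.
have hxp : ~~ (p %| x)%N.
  by apply/negP => /(dvdn_leq xpos); move: hx; lia.
have [a' ha'] := bezout_p hxp.
set c'' := map (fun v => (a' * v) %% p)%N c.
have c''g : c'' \in grid p (size a).
  rewrite mem_grid size_map hs all_map; apply/allP => v _ /=.
  exact: ltn_pmod (prime_gt0 pp).
apply: (negP (hy _ c''g)).
have -> : y - lin a c'' = ((1 + a' * x)%:R * y - a'%:R * (x%:R * y + lin a c))
    + (a'%:R * lin a c - lin a c'').
  rewrite natrD natrM; ring.
apply: nuD; first by apply: nuB; [apply: nuMr; apply: nu_natp | apply: nuMl].
rewrite (linE a (n:=size c) (c := c'')) ?size_map // /lin mulr_sumr.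
under eq_bigr do rewrite mulrA -natrM.
apply: nu_sumB => j; rewrite /c'' (nth_map 0%N) //.
by apply: nu_natB; rewrite modn_mod.
Qed.

Lemma indep_repr b : indep b ->
  (forall y, exists2 c, c \in grid p (size b) & nu (y - lin b c)) ->
  residue_field_card A (p ^ size b)%N.
Proof.
move=> hb hcov; set f := size b.
exists (map (lin b) (grid p f)); split.
- by rewrite size_map size_grid.
- move=> i j hi hj; rewrite -(size_grid p f) in hi hj.
  rewrite !(nth_map [::]) //.
  set c1 := nth [::] _ i; set c2 := nth [::] _ j.
  have g1 : c1 \in grid p f := mem_nth _ hi.
  have g2 : c2 \in grid p f := mem_nth _ hj.
  move=> hn; case: (c1 =P c2) => [e|ne].
    by apply/eqP; rewrite -(nth_uniq [::] hi hj (grid_uniq p f)); apply/eqP.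
  exfalso.
  move: (g1) (g2); rewrite !mem_grid => /andP [/eqP s1 a1] /andP [/eqP s2 a2].
  pose d := mkseq (fun k => (nth 0%N c1 k + (p - nth 0%N c2 k)) %% p)%N f.
  have dg : d \in grid p f.
    rewrite mem_grid size_mkseq eqxx /=; apply/allP => v /mapP [k _ ->].
    exact: ltn_pmod (prime_gt0 pp).
  have [k hk hne] : exists2 k, (k < f)%N & nth 0%N c1 k != nth 0%N c2 k.
    case: (boolP [exists k : 'I_f, nth 0%N c1 k != nth 0%N c2 k]) => [/existsP [k hk]|/existsPn H].
      by exists k.
    exfalso; apply: ne; apply: (eq_from_nth (x0 := 0%N)); first by rewrite s1 s2.
    move=> k; rewrite s1 => hk; have := H (Ordinal hk); by rewrite negbK => /eqP.
  have hd : has (fun x => x != 0%N) d.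
    apply/hasP; exists (nth 0%N d k); first by apply: mem_nth; rewrite size_mkseq.
    rewrite nth_mkseq //.
    have u1 : (nth 0%N c1 k < p)%N by apply: (allP a1); apply: mem_nth; rewrite s1.
    have u2 : (nth 0%N c2 k < p)%N by apply: (allP a2); apply: mem_nth; rewrite s2.
    move: hne u1 u2; set u := nth 0%N c1 k; set v := nth 0%N c2 k => hne u1 u2.
    apply/negP => /eqP h0; have /dvdnP [q hq] : (p %| u + (p - v))%N by rewrite /dvdn h0.
    move: hq hne u1 u2; case: q => [|[|q]]; [lia | lia | nia].
  suff hw : nu (lin b d - (lin b c1 - lin b c2)).
    by have := nu_unit (hb d dg hd) hw; rewrite /nu hn.
  rewrite (linE b (n := f) (c := d)) ?size_mkseq // (linE b s1) (linE b s2).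
  rewrite -sumrB; under [X in _ - X]eq_bigr do rewrite -mulrBl.
  apply: nu_sumB => l.
  have u2 : (nth 0%N c2 l <= p)%N.
    case: (ltnP l f) => hl; last by rewrite nth_default // s2.
    by apply: ltnW; apply: (allP a2); apply: mem_nth; rewrite s2.
  case: (ltnP l f) => hl; last first.
    by rewrite !nth_default ?size_mkseq ?s1 ?s2 // subrr subr0; exact: nu0.
  rewrite nth_mkseq //.
  have -> : ((nth 0%N c1 l + (p - nth 0%N c2 l)) %% p)%:R - ((nth 0%N c1 l)%:R - (nth 0%N c2 l)%:R)
     = ((nth 0%N c1 l + (p - nth 0%N c2 l)) %% p + nth 0%N c2 l)%:R - (nth 0%N c1 l)%:R :> A.
    by rewrite natrD; ring.
  apply: nu_natB; rewrite modnDml -addnA subnK // modnDr //.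
- move=> y; have [c cg hc] := hcov y; exists (index c (grid p f)).
    by rewrite -(size_grid p f) index_mem.
  by rewrite (nth_map [::]) ?nth_index // index_mem.
Qed.
End Local.

Lemma lin_map (A : comUnitRingType) (F : fieldType) (f : {rmorphism A -> F}) b c :
  f (lin b c) = lin (map f b) c.
Proof.
rewrite /lin rmorph_sum; apply: eq_bigr => j _; rewrite rmorphM rmorph_nat.
case: (ltnP j (size b)) => h; first by rewrite (nth_map 0).
by rewrite [b`_j]nth_default // [(map f b)`_j]nth_default ?size_map // rmorph0.
Qed.

Lemma indep_bound (A : comUnitRingType) (F : fieldType) (m r p : nat)
  (phi : 'I_m -> {rmorphism A -> F}) (pF : p \in [pchar F]) :
  (0 < m)%N -> (1 <= r)%N ->
  (forall u : A, u \is a GRing.unit -> \prod_(i < m) phi i (u ^+ r) = 1) ->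
  forall a : seq A, indep p a -> (p.-1 * size a <= m * r)%N.
Proof.
move=> hm hr hyp a ha; rewrite leqNgt; apply/negP => hlt.
set n := size a in hlt.
have := grid_sum0 pF (n:=n) (D := [set: 'I_m * 'I_r]) (fun _ => 0) (fun k => map (phi k.1) a).
rewrite cardsT card_prod !card_ord => /(_ hlt).
have E : forall c, c \in grid p n ->
    \prod_(k in [set: 'I_m * 'I_r]) (0 + lin (map (phi k.1) a) c) = 1 - ((c == nseq n 0%N)%:R).
  move=> c cg.
  under eq_bigr do rewrite add0r -lin_map.
  rewrite (eq_bigl (fun _ => true)); last by move=> k; rewrite inE.
  have -> : \prod_(k : 'I_m * 'I_r) phi k.1 (lin a c) = \prod_(i < m) \prod_(j < r) phi i (lin a c).
    by rewrite pair_big.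
  under eq_bigr do rewrite prodr_const card_ord -rmorphXn.
  move: cg; rewrite mem_grid => /andP [/eqP sc ac].
  case: (boolP (has (fun x => x != 0%N) c)) => hc.
    rewrite hyp; last by apply: ha => //; rewrite mem_grid sc eqxx ac.
    have -> : (c == nseq n 0%N) = false.
      by apply/negP => /eqP ec; move: hc; rewrite ec has_nseq eqxx andbF.
    by rewrite subr0.
  have ec : c = nseq n 0%N.
    rewrite -sc; apply/all_pred1P; apply/allP => x xc; apply/negPn; apply/negP => hx.
    by apply: (negP hc); apply/hasP; exists x.
  have -> : lin a c = 0.
    rewrite /lin big1 // => j _; rewrite [c in nth _ c _]ec nth_nseq; case: ifP => _; by rewrite mul0r.
  rewrite ec eqxx subrr.
  under eq_bigr do rewrite expr0n (gtn_eqF hr) rmorph0.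
  by rewrite prodr_const card_ord expr0n (gtn_eqF hm).
rewrite (eq_big_seq _ E) sumrB sum_grid_const ?sum_grid_zero.
  by move/eqP; rewrite sub0r oppr_eq0 oner_eq0.
  exact: pF.
  exact: pF.
by case: (n) hlt => //; rewrite muln0.
Qed.

Unset Implicit Arguments.

Theorem mainTheorem11 (A : comUnitRingType) (F : fieldType) (m r : nat)
  (phi : 'I_m -> {rmorphism A -> F}) :
  local_ring A -> (0 < m)%N -> (1 <= r)%N ->
  (forall u : A, u \is a GRing.unit -> \prod_(i < m) phi i (u ^+ r) = 1) ->
  exists p f t : nat,
    [/\ prime p, residue_field_card A (p ^ f)%N,
        (m * r = (p - 1) * t)%N, (f <= t)%N & ((p - 1) * f <= m * r)%N].
Proof.
move=> hloc hm hr hyp.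
have hpow : forall n, (n%:R : A) \is a GRing.unit -> (n%:R : F) ^+ (m * r) = 1.
  move=> n hn; have := hyp _ hn.
  under eq_bigr do rewrite rmorphXn rmorph_nat.
  by rewrite prodr_const card_ord -exprM mulnC.
have [n [n2 hn]] : exists n, (2 <= n)%N /\ (n%:R : A) \is a GRing.unit.
  case: (boolP ((2%:R : A) \is a GRing.unit)) => h2; first by exists 2%N.
  case: (boolP ((3%:R : A) \is a GRing.unit)) => h3; first by exists 3%N.
  exfalso; have := hloc _ _ h3 (nuN h2).
  by rewrite -natrB // /nu unitr1.
have [p pF] : exists p, p \in [pchar F].
  have h1 : (1 < n ^ (m * r))%N.
    apply: leq_trans (ltn_expl _ n2).
    by move: hm hr; nia.
  apply: (natf0_pchar (n := (n ^ (m * r)).-1)); first by move: h1; lia.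
  by rewrite -subn1 natrB ?natrX ?hpow ?subrr //; move: h1; lia.
have pp := pcharf_prime pF.
have pA : (p%:R : A) \isn't a GRing.unit.
  apply/negP => hu; have := rmorph_unit (phi (Ordinal hm)) hu.
  by rewrite rmorph_nat (pcharf0 pF) unitr0.
have p1 : (0 < p.-1)%N by have := prime_gt1 pp; lia.
have dv : (p.-1 %| m * r)%N.
  have Hx : forall x, (0 < x < p)%N -> (x%:R : F) ^+ (m * r %% p.-1) = 1.
    move=> x /andP [x0 xp].
    have nd : ~~ (p %| x)%N by apply/negP => /(dvdn_leq x0); lia.
    have := hpow _ (unit_nat hloc pp pA nd).
    rewrite {1}(divn_eq (m * r) p.-1) exprD [(_ %/ _ * _)%N]mulnC exprM.
    by rewrite (natF_fermat pF nd) expr1n mul1r.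
  case: (posnP (m * r %% p.-1)) => [z|pos]; first by rewrite /dvdn z.
  exfalso; have := roots_bound pF pos Hx; have := ltn_pmod (m * r) p1; lia.
have step : forall a : seq A, indep p a ->
    (forall y, exists2 c, c \in grid p (size a) & nu (y - lin a c)) \/
    exists y, indep p (y :: a).
  move=> a ha; case: (classic (forall y, exists2 c, c \in grid p (size a) & nu (y - lin a c))) => hc.
    by left.
  right; have [y hy] := not_all_ex_not _ _ hc; exists y.
  apply: (indep_ext hloc pp pA ha) => c cg; apply/negP => hnn; apply: hy; by exists c.
have build : forall k (a : seq A), indep p a -> (m * r - size a <= k)%N ->
    exists b : seq A, indep p b /\
      (forall y, exists2 c, c \in grid p (size b) & nu (y - lin b c)).
  elim=> [|k IH] a ha hk; case: (step a ha) => [hc|[y hy]]; try by exists a.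
    have := indep_bound pF hm hr hyp hy; rewrite /= => hb.
    have := leq_pmull (size a).+1 p1; move: hk hb; nia.
  apply: (IH (y :: a) hy).
  have := indep_bound pF hm hr hyp hy; rewrite /= => hb.
  have := leq_pmull (size a).+1 p1; move: hk hb; nia.
have i0 : indep p ([::] : seq A).
  by move=> c; rewrite mem_grid => /andP [/eqP /size0nil -> _].
have [b [hb hcov]] := build (m * r)%N [::] i0 (leq_subr _ _).
have bnd := indep_bound pF hm hr hyp hb.
exists p, (size b), (m * r %/ p.-1)%N; rewrite subn1; split => //.
- by have := indep_repr hloc pp pA hb hcov.
- by rewrite [X in _ = X]mulnC divnK.
- by rewrite -(leq_pmul2l p1) [X in (_ <= X)%N]mulnC divnK.
Qed.
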